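(* For all integers $m,n\ge1$ there exist a Heyting algebra $H$ and monotone polynomials $f,g:H\to H$ such that $\mu.f=f^n(\bot)$, $\mu.g=g^m(\bot)$, $\mu.(f\wedge g)=(f\wedge g)^{m+n-1}(\bot)$ and $(f\wedge g)^{m+n-2}(\bot)\neq(f\wedge g)^{m+n-1}(\bot)$.
   Context: A function $f:H\to H$ is a polynomial if there exist an IPC formula $\phi$, a variable $x$ and a valuation $v$ in $H$ of the other variables of $\phi$ such that $f(h)=[\![\phi]\!]_{(v,h/x)}$ for all $h$. $f\wedge g$ is the pointwise meet; $\mu$ denotes least fixed point. *)

(* Defs.v *)
From Stdlib Require Import Arith.

Record HeytingAlgebra := {
  carrier :> Type;
  hle : carrier -> carrier -> Prop;
  hmeet : carrier -> carrier -> carrier;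
  hjoin : carrier -> carrier -> carrier;
  himp : carrier -> carrier -> carrier;
  hbot : carrier;
  htop : carrier;
  hle_refl : forall a, hle a a;
  hle_trans : forall a b c, hle a b -> hle b c -> hle a c;
  hle_antisym : forall a b, hle a b -> hle b a -> a = b;
  hmeet_glb : forall a b c, hle c (hmeet a b) <-> (hle c a /\ hle c b);
  hjoin_lub : forall a b c, hle (hjoin a b) c <-> (hle a c /\ hle b c);
  hbot_least : forall a, hle hbot a;
  htop_greatest : forall a, hle a htop;
  himp_adj : forall a b c, hle (hmeet c a) b <-> hle c (himp a b)
}.

Arguments hle {h}.
Arguments hmeet {h}.
Arguments hjoin {h}.
Arguments himp {h}.
Arguments hbot {h}.
Arguments htop {h}.

Inductive ipc_formula : Type :=
| FVar : nat -> ipc_formula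
| FBot : ipc_formula
| FTop : ipc_formula
| FAnd : ipc_formula -> ipc_formula -> ipc_formula
| FOr : ipc_formula -> ipc_formula -> ipc_formula
| FImp : ipc_formula -> ipc_formula -> ipc_formula.

Fixpoint interp {H : HeytingAlgebra} (v : nat -> H) (phi : ipc_formula) : H :=
  match phi with
  | FVar k => v k
  | FBot => hbot
  | FTop => htop
  | FAnd a b => hmeet (interp v a) (interp v b)
  | FOr a b => hjoin (interp v a) (interp v b)
  | FImp a b => himp (interp v a) (interp v b)
  end.

Definition upd {H : HeytingAlgebra} (v : nat -> H) (x : nat) (h : H) : nat -> H :=
  fun k => if Nat.eqb k x then h else v k.

Definition is_polynomial {H : HeytingAlgebra} (f : H -> H) : Prop :=
  exists (phi : ipc_formula) (x : nat) (v : nat -> H),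
    forall h : H, f h = interp (upd v x h) phi.

Definition monotone {H : HeytingAlgebra} (f : H -> H) : Prop :=
  forall a b : H, hle a b -> hle (f a) (f b).

Definition fmeet {H : HeytingAlgebra} (f g : H -> H) : H -> H :=
  fun h => hmeet (f h) (g h).

Definition is_lfp {H : HeytingAlgebra} (f : H -> H) (a : H) : Prop :=
  f a = a /\ forall b : H, f b = b -> hle a b.

Definition iter_bot {H : HeytingAlgebra} (f : H -> H) (k : nat) : H :=
  Nat.iter k f hbot.

(* Main.v *)
Require Import Defs.
From Stdlib Require Import Arith Lia Eqdep_dec Bool.

Definition C (T:nat) := {k : nat | Nat.leb k T = true}.
Definition val {T} (a : C T) : nat := proj1_sig a.
Lemma cl_pf T k : Nat.leb (Nat.min k T) T = true.
Proof. apply Nat.leb_le; lia. Qed.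
Definition cl T (k:nat) : C T := exist _ (Nat.min k T) (cl_pf T k).
Lemma val_cl T k : val (cl T k) = Nat.min k T.
Proof. reflexivity. Qed.
Lemma valT T (a : C T) : val a <= T.
Proof. destruct a as [a Ha]; simpl; apply Nat.leb_le; exact Ha. Qed.
Lemma val_inj T (a b : C T) : val a = val b -> a = b.
Proof. destruct a as [a Ha], b as [b Hb]; simpl; intros ->.
  f_equal; apply UIP_dec, bool_dec. Qed.

Definition cle {T} (a b : C T) := val a <= val b.
Definition cmeet {T} (a b : C T) := cl T (Nat.min (val a) (val b)).
Definition cjoin {T} (a b : C T) := cl T (Nat.max (val a) (val b)).
Definition cimp {T} (a b : C T) := if Nat.leb (val a) (val b) then cl T T else b.

Ltac vb := repeat match goal with a : C _ |- _ => pose proof (valT _ a); revert a end; intros.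

Definition CH (T:nat) : HeytingAlgebra.
Proof.
  refine {| carrier := C T; hle := @cle T; hmeet := @cmeet T; hjoin := @cjoin T;
            himp := @cimp T; hbot := cl T 0; htop := cl T T |};
  unfold cle, cmeet, cjoin, cimp; intros.
  - lia.
  - lia.
  - apply val_inj; lia.
  - pose proof (valT _ a); pose proof (valT _ b); pose proof (valT _ c);
    rewrite val_cl; lia.
  - pose proof (valT _ a); pose proof (valT _ b); pose proof (valT _ c);
    rewrite val_cl; lia.
  - rewrite val_cl; lia.
  - pose proof (valT _ a); rewrite val_cl; lia.
  - pose proof (valT _ a); pose proof (valT _ b); pose proof (valT _ c);
    rewrite val_cl; destruct (Nat.leb_spec (val a) (val b)); rewrite ?val_cl; lia.
Defined.

Definition mkf T (F : nat -> nat) : CH T -> CH T := fun x => cl T (F (val x)).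

Definition term T j := FAnd (FImp (FVar (S j)) (FVar 0)) (FVar (T+2+j)).
Fixpoint ors T J := match J with 0 => term T 0 | S J' => FOr (ors T J') (term T (S J')) end.
Definition vv T F (k:nat) : CH T := if Nat.leb k (T+1) then cl T (k-1) else cl T (F (k-T-2)).

Lemma term_val T F (x : CH T) j : j <= T ->
  val (interp (upd (vv T F) 0 x) (term T j)) =
  if Nat.leb j (val x) then Nat.min (F j) T else Nat.min (val x) (Nat.min (F j) T).
Proof.
  intros Hj. pose proof (valT _ x). unfold term. cbn [interp].
  change (hmeet ?a ?b) with (@cmeet T a b). change (himp ?a ?b) with (@cimp T a b).
  unfold upd, vv.
  replace (Nat.eqb (S j) 0) with false by reflexivity.
  replace (Nat.eqb (T+2+j) 0) with false by (symmetry; apply Nat.eqb_neq; lia).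
  replace (Nat.leb (S j) (T+1)) with true by (symmetry; apply Nat.leb_le; lia).
  replace (Nat.leb (T+2+j) (T+1)) with false by (symmetry; apply Nat.leb_gt; lia).
  unfold cmeet, cimp. replace (0 =? 0) with true by reflexivity.
  replace (S j - 1) with j by lia. replace (T+2+j-T-2) with j by lia.
  cbn [val cl proj1_sig].
  replace (Nat.min j T) with j by lia.
  destruct (Nat.leb_spec j (val x)); cbn [val cl proj1_sig]; lia.
Qed.

Lemma ors_val T F (x : CH T) J :
  (forall a b, a <= b <= T -> F a <= F b) -> (forall a, a <= T -> a <= F a) -> J <= T ->
  val (interp (upd (vv T F) 0 x) (ors T J)) <= Nat.min (F (val x)) T /\
  (val x <= J -> Nat.min (F (val x)) T <= val (interp (upd (vv T F) 0 x) (ors T J))).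
Proof.
  intros Hm Hi. pose proof (valT _ x). induction J as [|J IH]; intros HJ.
  - change (ors T 0) with (term T 0). rewrite term_val by lia.
    destruct (Nat.leb_spec 0 (val x)); [|lia].
    specialize (Hm 0 (val x)). split; [lia|]. intros Hx.
    assert (E: val x = 0) by lia. rewrite E. lia.
  - change (ors T (S J)) with (FOr (ors T J) (term T (S J))).
    cbn [interp]. change (hjoin ?a ?b) with (@cjoin T a b). unfold cjoin. cbn [val cl proj1_sig].
    destruct IH as [IH1 IH2]; [lia|].
    rewrite term_val by lia.
    destruct (Nat.leb_spec (S J) (val x)).
    + specialize (Hm (S J) (val x)). split; [lia|]. intros Hx.
      assert (E: val x = S J) by lia. rewrite E. lia.
    + pose proof (Hi _ H). split; [lia|]. intros. pose proof (IH2 ltac:(lia)). lia.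
Qed.

Lemma mkf_poly T F :
  (forall a b, a <= b <= T -> F a <= F b) -> (forall a, a <= T -> a <= F a) ->
  is_polynomial (mkf T F).
Proof.
  intros Hm Hi. exists (FOr (FVar 0) (ors T T)), 0, (vv T F). intros h.
  apply val_inj. unfold mkf.
  cbn [interp]. change (hjoin ?a ?b) with (@cjoin T a b). unfold cjoin. cbn [val cl proj1_sig].
  destruct (ors_val T F h T Hm Hi (le_n _)) as [A B].
  pose proof (valT _ h). pose proof (B H). pose proof (Hi _ H).
  unfold upd at 1. simpl. lia.
Qed.

Lemma iter_val T (f : CH T -> CH T) h : (forall x, val (f x) = h (val x)) ->
  forall k, val (iter_bot f k) = Nat.iter k h 0.
Proof.
  intros Hf k. induction k as [|k IH]; [reflexivity|].
  change (iter_bot f (S k)) with (f (iter_bot f k)). rewrite Hf, IH. reflexivity.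
Qed.

Lemma lfp_top T (f : CH T -> CH T) h a : (forall x, val (f x) = h (val x)) ->
  h T = T -> (forall y, y <= T -> h y = y -> y = T) -> val a = T -> is_lfp f a.
Proof.
  intros Hf HT Hy Ha. split.
  - apply val_inj. rewrite Hf, Ha. exact HT.
  - intros b Hb. change (val a <= val b). pose proof (valT _ b).
    assert (val b = T). { apply Hy; auto. rewrite <- Hf, Hb. reflexivity. } lia.
Qed.

Lemma mkf_mono T F : (forall a b, a <= b <= T -> F a <= F b) -> monotone (mkf T F).
Proof.
  intros Hm a b Hab. change (val a <= val b) in Hab. change (val (mkf T F a) <= val (mkf T F b)).
  unfold mkf. cbn [val cl proj1_sig]. pose proof (valT _ b). specialize (Hm (val a) (val b)). lia.
Qed.

Theorem mainTheorem19 :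
  forall m n : nat, 1 <= m -> 1 <= n ->
  exists (H : HeytingAlgebra) (f g : H -> H),
    is_polynomial f /\ is_polynomial g /\ monotone f /\ monotone g /\
    is_lfp f (iter_bot f n) /\
    is_lfp g (iter_bot g m) /\
    is_lfp (fmeet f g) (iter_bot (fmeet f g) (m + n - 1)) /\
    iter_bot (fmeet f g) (m + n - 2) <> iter_bot (fmeet f g) (m + n - 1).
Proof.
  intros m n Hm Hn. set (T := m + n - 1).
  set (F := fun k => if k <? n - 1 then k + 1 else T).
  set (G := fun k => if k <? n - 1 then n else k + 1).
  assert (FM : forall a b, a <= b <= T -> F a <= F b).
  { intros a b Hab. unfold F. destruct (Nat.ltb_spec a (n-1)); destruct (Nat.ltb_spec b (n-1)); lia. }
  assert (FI : forall a, a <= T -> a <= F a).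
  { intros a Ha. unfold F. destruct (Nat.ltb_spec a (n-1)); lia. }
  assert (GM : forall a b, a <= b <= T -> G a <= G b).
  { intros a b Hab. unfold G. destruct (Nat.ltb_spec a (n-1)); destruct (Nat.ltb_spec b (n-1)); lia. }
  assert (GI : forall a, a <= T -> a <= G a).
  { intros a Ha. unfold G. destruct (Nat.ltb_spec a (n-1)); lia. }
  exists (CH T), (mkf T F), (mkf T G).
  set (hf := fun y => Nat.min (F y) T).
  set (hg := fun y => Nat.min (G y) T).
  set (hm := fun y => Nat.min (Nat.min (F y) T) (Nat.min (G y) T)).
  assert (Ef : forall x, val (mkf T F x) = hf (val x)) by reflexivity.
  assert (Eg : forall x, val (mkf T G x) = hg (val x)) by reflexivity.
  assert (Em : forall x, val (fmeet (mkf T F) (mkf T G) x) = hm (val x)).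
  { intros x. unfold fmeet. change (hmeet ?a ?b) with (@cmeet T a b). unfold cmeet.
    cbn [val cl proj1_sig]. unfold hm. unfold mkf. cbn [val cl proj1_sig]. lia. }
  pose proof (iter_val _ _ _ Ef) as If.
  pose proof (iter_val _ _ _ Eg) as Ig.
  pose proof (iter_val _ _ _ Em) as Im.
  assert (If1 : forall k, k <= n - 1 -> Nat.iter k hf 0 = k).
  { induction k as [|k IH]; intros Hk; [reflexivity|]. simpl Nat.iter. rewrite IH by lia.
    unfold hf, F. destruct (Nat.ltb_spec k (n-1)); lia. }
  assert (If2 : Nat.iter n hf 0 = T).
  { destruct n as [|n']; [lia|]. simpl Nat.iter. rewrite If1 by lia.
    unfold hf, F. destruct (Nat.ltb_spec n' (S n' - 1)); lia. }
  assert (Ig1 : forall k, 1 <= k -> Nat.iter k hg 0 = Nat.min (n + k - 1) T).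
  { induction k as [|k IH]; intros Hk; [lia|]. simpl Nat.iter.
    destruct k as [|k].
    - simpl Nat.iter. unfold hg, G. destruct (Nat.ltb_spec 0 (n-1)); lia.
    - rewrite IH by lia. unfold hg, G.
      destruct (Nat.ltb_spec (Nat.min (n + S k - 1) T) (n-1)); lia. }
  assert (Im1 : forall k, Nat.iter k hm 0 = Nat.min k T).
  { induction k as [|k IH]; [reflexivity|]. simpl Nat.iter. rewrite IH.
    unfold hm, F, G. destruct (Nat.ltb_spec (Nat.min k T) (n-1)); lia. }
  split; [apply mkf_poly; auto|].
  split; [apply mkf_poly; auto|].
  split; [apply mkf_mono; auto|].
  split; [apply mkf_mono; auto|].
  split.
  { apply (lfp_top _ _ hf); auto.
    - unfold hf, F. destruct (Nat.ltb_spec T (n-1)); lia.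
    - intros y Hy. unfold hf, F. destruct (Nat.ltb_spec y (n-1)); lia.
    - rewrite If; auto. }
  split.
  { apply (lfp_top _ _ hg); auto.
    - unfold hg, G. destruct (Nat.ltb_spec T (n-1)); lia.
    - intros y Hy. unfold hg, G. destruct (Nat.ltb_spec y (n-1)); lia.
    - rewrite Ig, Ig1 by lia. lia. }
  split.
  { apply (lfp_top _ _ hm); auto.
    - unfold hm, F, G. destruct (Nat.ltb_spec T (n-1)); lia.
    - intros y Hy. unfold hm, F, G. destruct (Nat.ltb_spec y (n-1)); lia.
    - rewrite Im, Im1. lia. }
  intros E. apply (f_equal val) in E. rewrite !Im, !Im1 in E. lia.
Qed.
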